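(* Let $\lambda_1,\lambda_2$ and $\Omega$ be as in the context, let $(c,\theta)\in\Omega$, $D=\sin\theta/c$, and let $\varphi$ be the solution of $$\varphi'(u)=\sqrt{c^2+2\cos\theta\,B-D^2B^2},\qquad \varphi(0)=0,\qquad\text{where } B=\lambda_1^2\cos^2\varphi(u)+\lambda_2^2\sin^2\varphi(u).$$ Then: (1) $\varphi$ is a well-defined increasing bijection from $\mathbb{R}$ to $\mathbb{R}$; (2) $\varphi$ is odd; (3) there exists a real number $U>0$ such that $\varphi(u+U)=\varphi(u)+\pi$ for all $u\in\mathbb{R}$; (4) $\varphi(kU)=k\pi$ for all $k\in\mathbb{Z}$; (5) $\varphi(kU/2)=k\pi/2$ for all odd integers $k$.
   Context: Either $\lambda_1>\lambda_2>0$ or $\lambda_1=\lambda_2=1$. For $c>0$ put $\theta_c^+=\pi$ if $c>\sqrt2\lambda_1$ and $\theta_c^+=\arccos(1-c^2/\lambda_1^2)\in(0,\pi]$ if $0<c\le\sqrt2\lambda_1$. $\Omega=\{(c,\theta)\in\mathbb{R}^2: c>0,\ \theta\in(-\theta_c^+,\theta_c^+)\}$. *)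

(* Defs.v *)
From Stdlib Require Import Reals ZArith.
Open Scope R_scope.

Definition lambda_hyp (l1 l2 : R) : Prop :=
  (l1 > l2 /\ l2 > 0) \/ (l1 = 1 /\ l2 = 1).

Definition theta_plus (l1 c : R) : R :=
  if Rlt_dec (sqrt 2 * l1) c then PI else acos (1 - c ^ 2 / l1 ^ 2).

Definition in_Omega (l1 c th : R) : Prop :=
  0 < c /\ - theta_plus l1 c < th < theta_plus l1 c.

Definition Bfun (l1 l2 x : R) : R :=
  l1 ^ 2 * (cos x) ^ 2 + l2 ^ 2 * (sin x) ^ 2.

Definition Ffun (l1 l2 c th x : R) : R :=
  let B := Bfun l1 l2 x in
  let D := sin th / c in
  sqrt (c ^ 2 + 2 * cos th * B - D ^ 2 * B ^ 2).

Definition is_solution (l1 l2 c th : R) (phi : R -> R) : Prop :=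
  phi 0 = 0 /\ forall u, derivable_pt_lim phi u (Ffun l1 l2 c th (phi u)).

(* Main.v *)
Require Import Defs.
From Stdlib Require Import Reals ZArith Lra Lia ClassicalEpsilon FunctionalExtensionality Ranalysis5.
From Coquelicot Require Import Coquelicot.
Open Scope R_scope.

Definition goodF (F : R -> R) (M : R) : Prop :=
  (forall x, 0 < F x) /\ (forall x, F x <= M) /\
  (forall x, continuous (fun t => / F t) x) /\
  (forall x, F (- x) = F x) /\ (forall x, F (x + PI) = F x).

Definition Psi (F : R -> R) (x : R) : R := RInt (fun t => / F t) 0 x.

Lemma Psi_deriv F M (H : goodF F M) x : derivable_pt_lim (Psi F) x (/ F x).
Proof.
  destruct H as (H1 & H2 & H3 & H4 & H5).
  apply is_derive_Reals.
  apply (is_derive_RInt (fun t => / F t) (Psi F) 0 x).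
  - apply filter_forall. intros b. unfold Psi.
    apply (@RInt_correct R_CompleteNormedModule).
    apply (@ex_RInt_continuous R_CompleteNormedModule). intros; apply H3.
  - apply H3.
Qed.

Lemma Psi0 F : Psi F 0 = 0.
Proof. unfold Psi. rewrite RInt_point. reflexivity. Qed.

Lemma mvt_gen g d : (forall x, derivable_pt_lim g x (d x)) ->
  forall x y, x < y -> exists z, x < z < y /\ g y - g x = d z * (y - x).
Proof.
  intros Hd x y Hxy.
  set (pr := fun t => exist (fun l => derivable_pt_abs g t l) (d t) (Hd t) : derivable_pt g t).
  destruct (MVT_cor1 g x y pr Hxy) as (z & Hz & Hz2).
  exists z; split; auto.
Qed.

Lemma const_gen g : (forall x, derivable_pt_lim g x 0) -> forall x y, g x = g y.
Proof.
  intros Hd x y.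
  destruct (Rtotal_order x y) as [h|[h|h]].
  - destruct (mvt_gen g (fun _ => 0) Hd x y h) as (z & _ & e). lra.
  - subst; auto.
  - destruct (mvt_gen g (fun _ => 0) Hd y x h) as (z & _ & e). lra.
Qed.


Lemma dl_ext f g x l l' : (forall t, f t = g t) -> l = l' ->
  derivable_pt_lim f x l -> derivable_pt_lim g x l'.
Proof.
  intros H e; subst. replace g with f; auto. apply functional_extensionality; auto.
Qed.

Lemma dl_opp x : derivable_pt_lim (fun t => - t) x (-1).
Proof.
  apply (dl_ext (- id)%F _ _ (-1)); [intros; reflexivity| reflexivity|].
  apply derivable_pt_lim_opp, derivable_pt_lim_id.
Qed.

Lemma dl_shift a x : derivable_pt_lim (fun t => t + a) x 1.
Proof.
  apply (dl_ext (id + fct_cte a)%F _ _ (1+0)); [intros; reflexivity| ring|].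
  apply derivable_pt_lim_plus. apply derivable_pt_lim_id. apply derivable_pt_lim_const.
Qed.

Lemma dl_comp f g x lf lg : derivable_pt_lim g x lg -> derivable_pt_lim f (g x) lf ->
  derivable_pt_lim (fun t => f (g t)) x (lf * lg).
Proof.
  intros. apply (dl_ext (comp f g) _ _ (lf*lg)); [intros; reflexivity | reflexivity|].
  apply derivable_pt_lim_comp; auto.
Qed.

Lemma dl_plus f g x lf lg : derivable_pt_lim f x lf -> derivable_pt_lim g x lg ->
  derivable_pt_lim (fun t => f t + g t) x (lf + lg).
Proof.
  intros. apply (dl_ext (f + g)%F _ _ (lf+lg)); [intros; reflexivity | reflexivity|].
  apply derivable_pt_lim_plus; auto.
Qed.

Lemma dl_minus f g x lf lg : derivable_pt_lim f x lf -> derivable_pt_lim g x lg ->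
  derivable_pt_lim (fun t => f t - g t) x (lf - lg).
Proof.
  intros. apply (dl_ext (f - g)%F _ _ (lf-lg)); [intros; reflexivity | reflexivity|].
  apply derivable_pt_lim_minus; auto.
Qed.

Lemma dl_cst a x : derivable_pt_lim (fun _ => a) x 0.
Proof. apply (dl_ext (fct_cte a) _ _ 0); [intros; reflexivity| reflexivity|]. apply derivable_pt_lim_const. Qed.

Lemma dl_idd x : derivable_pt_lim (fun t => t) x 1.
Proof. apply (dl_ext id _ _ 1); [intros; reflexivity| reflexivity|]. apply derivable_pt_lim_id. Qed.


Lemma Psi_incr F M (H : goodF F M) x y : x < y -> Psi F x < Psi F y.
Proof.
  intros h. destruct (mvt_gen (Psi F) (fun t => / F t) (Psi_deriv F M H) x y h) as (z & _ & e).
  destruct H as (H1 & _).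
  assert (0 < / F z) by (apply Rinv_0_lt_compat; auto). nra.
Qed.

Lemma Psi_inj F M (H : goodF F M) x y : Psi F x = Psi F y -> x = y.
Proof.
  intros e. destruct (Rtotal_order x y) as [h|[h|h]]; auto;
  apply (Psi_incr F M H) in h; lra.
Qed.

Lemma Psi_odd F M (H : goodF F M) x : Psi F (- x) = - Psi F x.
Proof.
  assert (K : forall t, derivable_pt_lim (fun s => Psi F s + Psi F (- s)) t 0).
  { intros t. apply (dl_ext (fun s => Psi F s + Psi F (- s)) _ _ (/ F t + / F (- t) * -1)).
    - reflexivity.
    - destruct H as (_ & _ & _ & H4 & _). rewrite H4. ring.
    - apply dl_plus. apply (Psi_deriv F M H). apply dl_comp. apply dl_opp. apply (Psi_deriv F M H). }
  pose proof (const_gen _ K x 0). simpl in H0. rewrite Ropp_0, Psi0 in H0. lra.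
Qed.

Lemma Psi_per F M (H : goodF F M) x : Psi F (x + PI) = Psi F x + Psi F PI.
Proof.
  assert (K : forall t, derivable_pt_lim (fun s => Psi F (s + PI) - Psi F s) t 0).
  { intros t. apply (dl_ext (fun s => Psi F (s + PI) - Psi F s) _ _ (/ F (t + PI) * 1 - / F t)).
    - reflexivity.
    - destruct H as (_ & _ & _ & _ & H5). rewrite H5. ring.
    - apply dl_minus. apply dl_comp. apply dl_shift. apply (Psi_deriv F M H). apply (Psi_deriv F M H). }
  pose proof (const_gen _ K x 0). simpl in H0. rewrite Rplus_0_l, Psi0 in H0. lra.
Qed.

Lemma Psi_ge F M (H : goodF F M) x : 0 <= x -> x / M <= Psi F x.
Proof.
  intros hx. pose proof H as (H1 & H2 & _).
  assert (HM : 0 < M) by (apply Rlt_le_trans with (F 0); auto).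
  destruct hx as [hx|hx]; [|subst; rewrite Psi0; lra].
  destruct (mvt_gen (fun s => Psi F s - s / M) (fun t => / F t - / M)) with 0 x as (z & _ & e); auto.
  { intros t. apply dl_minus. apply (Psi_deriv F M H).
    apply (dl_ext (fun s => s * / M) _ _ (1 * / M)); [intros; reflexivity| ring|].
    apply (dl_ext (mult_real_fct (/ M) id) _ _ (/ M * 1)); [intros; unfold mult_real_fct, id; ring| ring|].
    apply derivable_pt_lim_scal, derivable_pt_lim_id. }
  rewrite Psi0 in e. 
  assert (/ M <= / F z) by (apply Rinv_le_contravar; auto).
  unfold Rdiv in *. nra.
Qed.

Lemma Psi_nat F M (H : goodF F M) x n :
  Psi F (x + INR n * PI) = Psi F x + INR n * Psi F PI.
Proof.
  induction n.
  - simpl. rewrite !Rmult_0_l, !Rplus_0_r. reflexivity.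
  - rewrite S_INR. replace (x + (INR n + 1) * PI) with ((x + INR n * PI) + PI) by ring.
    rewrite (Psi_per F M H), IHn. ring.
Qed.

Lemma Psi_Z F M (H : goodF F M) x k :
  Psi F (x + IZR k * PI) = Psi F x + IZR k * Psi F PI.
Proof.
  destruct (Z.le_gt_cases 0 k) as [h|h].
  - rewrite <- (Z2Nat.id k h), <- INR_IZR_INZ. apply (Psi_nat F M H).
  - replace k with (- Z.of_nat (Z.to_nat (- k)))%Z by lia.
    rewrite opp_IZR, <- INR_IZR_INZ. set (n := Z.to_nat (-k)).
    pose proof (Psi_nat F M H (x - INR n * PI) n) as e.
    replace (x - INR n * PI + INR n * PI) with x in e by ring.
    replace (x + - INR n * PI) with (x - INR n * PI) by ring. lra.
Qed.

Lemma Psi_cont F M (H : goodF F M) : continuity (Psi F).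
Proof.
  intros t. apply derivable_continuous_pt. exists (/ F t). apply (Psi_deriv F M H).
Qed.

Lemma Psi_surj F M (H : goodF F M) y : exists x, Psi F x = y.
Proof.
  pose proof H as (H1 & H2 & _).
  assert (HM : 0 < M) by (apply Rlt_le_trans with (F 0); auto).
  set (A := M * (Rabs y + 1)).
  assert (hA : 0 < A) by (unfold A; pose proof (Rabs_pos y); nra).
  pose proof (Psi_ge F M H A (Rlt_le _ _ hA)) as g.
  replace (A / M) with (Rabs y + 1) in g by (unfold A; field; lra).
  pose proof (Psi_odd F M H A) as o.
  assert (y <= Rabs y) by apply Rle_abs.
  assert (- y <= Rabs y) by (rewrite <- Rabs_Ropp; apply Rle_abs).
  destruct (IVT (fun x => Psi F x - y) (- A) A) as (z & _ & e).
  - intros t. apply derivable_continuous_pt. exists (/ F t - 0).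
    apply dl_minus. apply (Psi_deriv F M H). apply dl_cst.
  - lra.
  - simpl. lra.
  - simpl. lra.
  - exists z. simpl in e. lra.
Qed.

Lemma sol_Psi F M (H : goodF F M) phi :
  phi 0 = 0 -> (forall u, derivable_pt_lim phi u (F (phi u))) ->
  forall u, Psi F (phi u) = u.
Proof.
  intros h0 hd.
  assert (K : forall t, derivable_pt_lim (fun s => Psi F (phi s) - s) t 0).
  { intros t. apply (dl_ext (fun s => Psi F (phi s) - s) _ _ (/ F (phi t) * F (phi t) - 1)).
    - reflexivity.
    - pose proof H as (H1 & _). specialize (H1 (phi t)). field. lra.
    - apply dl_minus. apply dl_comp. apply hd. apply (Psi_deriv F M H). apply dl_idd. }
  intros u. pose proof (const_gen _ K u 0). simpl in H0. rewrite h0, Psi0 in H0. lra.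
Qed.

Definition invPsi F M (H : goodF F M) (y : R) : R :=
  proj1_sig (constructive_indefinite_description _ (Psi_surj F M H y)).

Lemma invPsi_spec F M (H : goodF F M) y : Psi F (invPsi F M H y) = y.
Proof. unfold invPsi. destruct constructive_indefinite_description. simpl. auto. Qed.

Lemma invPsi_le F M (H : goodF F M) a b : a <= b -> invPsi F M H a <= invPsi F M H b.
Proof.
  intros h. destruct (Rle_lt_dec (invPsi F M H a) (invPsi F M H b)) as [r|r]; auto.
  apply (Psi_incr F M H) in r. rewrite !invPsi_spec in r. lra.
Qed.

Lemma invPsi_deriv F M (H : goodF F M) u :
  derivable_pt_lim (invPsi F M H) u (F (invPsi F M H u)).
Proof.
  set (g := invPsi F M H).
  assert (gs : forall y, Psi F (g y) = y) by (intros; apply invPsi_spec).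
  assert (Prf : forall a, g (u - 1) <= a <= g (u + 1) -> derivable_pt (Psi F) a).
  { intros a _. exists (/ F a). apply (Psi_deriv F M H). }
  assert (Prg : continuity_pt g u).
  { apply (continuity_pt_recip_interv (Psi F) g (g u - 1) (g u + 1)).
    - lra.
    - intros; apply (Psi_incr F M H); lra.
    - intros; unfold comp, id; auto.
    - intros x h1 h2. split.
      + destruct (Rle_lt_dec (g u - 1) (g x)) as [r|r]; auto.
        apply (Psi_incr F M H) in r. rewrite gs in r. lra.
      + destruct (Rle_lt_dec (g x) (g u + 1)) as [r|r]; auto.
        apply (Psi_incr F M H) in r. rewrite gs in r. lra.
    - intros; apply (Psi_cont F M H).
    - split; [rewrite <- (gs u) at 2 | rewrite <- (gs u) at 1]; apply (Psi_incr F M H); lra. }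
  assert (Pi : g (u - 1) <= g u <= g (u + 1)).
  { split; apply (invPsi_le F M H); lra. }
  pose proof (derivable_pt_lim_recip_interv (Psi F) g (u - 1) (u + 1) u Prf Prg
     ltac:(lra) ltac:(lra) Pi) as D.
  rewrite (derive_pt_eq_0 _ _ _ _ (Psi_deriv F M H (g u))) in D.
  pose proof H as (H1 & _). specialize (H1 (g u)).
  replace (F (g u)) with (1 / / F (g u)) by (field; lra).
  apply D.
  - intros; unfold comp, id; auto.
  - apply Rgt_not_eq, Rlt_gt, Rinv_0_lt_compat; auto.
Qed.

Lemma main_gen F M (H : goodF F M) :
  (exists phi : R -> R, phi 0 = 0 /\ forall u, derivable_pt_lim phi u (F (phi u))) /\
  (forall phi psi : R -> R, (phi 0 = 0 /\ forall u, derivable_pt_lim phi u (F (phi u))) ->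
     (psi 0 = 0 /\ forall u, derivable_pt_lim psi u (F (psi u))) -> forall u, phi u = psi u) /\
  (forall phi : R -> R, (phi 0 = 0 /\ forall u, derivable_pt_lim phi u (F (phi u))) ->
     ((forall x y, x < y -> phi x < phi y) /\
      (forall x y, phi x = phi y -> x = y) /\
      (forall y, exists x, phi x = y)) /\
     (forall u, phi (- u) = - phi u) /\
     (exists U : R, 0 < U /\
        (forall u, phi (u + U) = phi u + PI) /\
        (forall k : Z, phi (IZR k * U) = IZR k * PI) /\
        (forall k : Z, Z.odd k = true -> phi (IZR k * U / 2) = IZR k * PI / 2))).
Proof.
  split; [|split].
  - exists (invPsi F M H). split.
    + apply (Psi_inj F M H). rewrite invPsi_spec, Psi0. reflexivity.
    + apply invPsi_deriv.
  - intros phi psi [h1 h2] [k1 k2] u. apply (Psi_inj F M H).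
    rewrite (sol_Psi F M H phi h1 h2), (sol_Psi F M H psi k1 k2). reflexivity.
  - intros phi [h1 h2].
    pose proof (sol_Psi F M H phi h1 h2) as S.
    assert (inj : forall a b, Psi F a = Psi F b -> a = b) by apply (Psi_inj F M H).
    split; [split; [|split]|split].
    + intros x y hxy. destruct (Rlt_le_dec (phi x) (phi y)) as [r|r]; auto.
      destruct r as [r|r].
      * apply (Psi_incr F M H) in r. rewrite !S in r. lra.
      * apply (f_equal (Psi F)) in r. rewrite !S in r. lra.
    + intros x y e. apply (f_equal (Psi F)) in e. rewrite !S in e. auto.
    + intros y. exists (Psi F y). apply inj. rewrite S. reflexivity.
    + intros u. apply inj. rewrite S, (Psi_odd F M H), S. reflexivity.
    + exists (Psi F PI). split; [|split; [|split]].
      * rewrite <- (Psi0 F). apply (Psi_incr F M H). apply PI_RGT_0.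
      * intros u. apply inj. rewrite S, (Psi_per F M H), S. reflexivity.
      * intros k. apply inj. rewrite S.
        pose proof (Psi_Z F M H 0 k) as e. rewrite Rplus_0_l, Psi0, Rplus_0_l in e.
        rewrite e. reflexivity.
      * intros k hk. apply Z.odd_spec in hk. destruct hk as [j ->].
        apply inj. rewrite S.
        assert (h2' : Psi F (PI / 2) = Psi F PI / 2).
        { pose proof (Psi_per F M H (- (PI / 2))) as e.
          replace (- (PI / 2) + PI) with (PI / 2) in e by field.
          rewrite (Psi_odd F M H) in e. lra. }
        pose proof (Psi_Z F M H (PI / 2) j) as e.
        rewrite plus_IZR, mult_IZR.
        replace ((2 * IZR j + 1) * PI / 2) with (PI / 2 + IZR j * PI) by (simpl; field).
        rewrite e, h2'. simpl. field.
Qed.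

Lemma key_ineq l1 l2 c th : lambda_hyp l1 l2 -> in_Omega l1 c th ->
  l1 ^ 2 * (1 - cos th) < c ^ 2.
Proof.
  intros Hl [hc [ht1 ht2]].
  assert (hl1 : 0 < l1) by (destruct Hl as [[a b]|[a b]]; lra).
  unfold theta_plus in *. destruct (Rlt_dec (sqrt 2 * l1) c) as [r|r].
  - assert (s2 : sqrt 2 * sqrt 2 = 2) by (apply sqrt_sqrt; lra).
    assert (0 < sqrt 2) by (apply sqrt_lt_R0; lra).
    assert (0 < sqrt 2 * l1) by nra.
    assert ((sqrt 2 * l1) * (sqrt 2 * l1) < c * c) by nra.
    pose proof (COS_bound th). nra.
  - apply Rnot_lt_le in r.
    set (a := 1 - c ^ 2 / l1 ^ 2) in *.
    assert (0 < sqrt 2) by (apply sqrt_lt_R0; lra).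
    assert (s2 : sqrt 2 * sqrt 2 = 2) by (apply sqrt_sqrt; lra).
    assert (c * c <= 2 * (l1 * l1)) by nra.
    assert (ha : -1 <= a <= 1).
    { unfold a. split.
      - assert (c ^ 2 / l1 ^ 2 <= 2). { apply Rle_div_l; nra. } lra.
      - assert (0 <= c ^ 2 / l1 ^ 2). { apply Rle_div_r; nra. } lra. }
    pose proof (acos_bound a).
    assert (hc' : a < cos th).
    { rewrite <- (cos_acos a ha).
      destruct (Rle_lt_dec 0 th).
      - apply cos_decreasing_1; lra.
      - rewrite <- (cos_neg th). apply cos_decreasing_1; lra. }
    unfold a in hc'.
    assert (c ^ 2 / l1 ^ 2 * l1 ^ 2 = c ^ 2) by (field; lra).
    assert (0 < l1 ^ 2) by nra.
    nra.
Qed.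

Lemma B_bounds l1 l2 x : lambda_hyp l1 l2 -> 0 < Bfun l1 l2 x <= l1 ^ 2.
Proof.
  intros Hl. unfold Bfun. pose proof (sin2_cos2 x). unfold Rsqr in *.
  assert (h : 0 < l2 /\ l2 <= l1) by (destruct Hl as [[a b]|[a b]]; lra).
  destruct h as [a b].
  split.
  - pose proof (pow2_ge_0 (cos x)). pose proof (pow2_ge_0 (sin x)).
    assert (l2 ^ 2 <= l1 ^ 2) by nra. assert (0 < l2 ^ 2) by nra.
    assert (l2 ^ 2 * cos x ^ 2 <= l1 ^ 2 * cos x ^ 2) by nra.
    assert (l2 ^ 2 * cos x ^ 2 + l2 ^ 2 * sin x ^ 2 = l2 ^ 2) by (simpl; nra).
    lra.
  - assert (l2 ^ 2 <= l1 ^ 2) by nra.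
    pose proof (pow2_ge_0 (sin x)). nra.
Qed.

Lemma G_pos l1 l2 c th x : lambda_hyp l1 l2 -> in_Omega l1 c th ->
  0 < c ^ 2 + 2 * cos th * Bfun l1 l2 x - (sin th / c) ^ 2 * Bfun l1 l2 x ^ 2.
Proof.
  intros Hl HO. pose proof (key_ineq _ _ _ _ Hl HO) as K.
  pose proof (B_bounds l1 l2 x Hl) as [b1 b2].
  destruct HO as [hc _].
  set (B := Bfun l1 l2 x) in *.
  pose proof (sin2_cos2 th). unfold Rsqr in *.
  pose proof (COS_bound th).
  assert (E : c ^ 2 + 2 * cos th * B - (sin th / c) ^ 2 * B ^ 2 =
     (c ^ 2 - B * (1 - cos th)) * (c ^ 2 + B * (1 + cos th)) / c ^ 2).
  { replace ((sin th / c) ^ 2) with (sin th ^ 2 / c ^ 2) by (field; lra).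
    replace (sin th ^ 2) with (1 - cos th ^ 2) by (simpl; nra). field. lra. }
  rewrite E. apply Rdiv_lt_0_compat; [|nra].
  apply Rmult_lt_0_compat; nra.
Qed.

Lemma Ffun_good l1 l2 c th : lambda_hyp l1 l2 -> in_Omega l1 c th ->
  goodF (Ffun l1 l2 c th) (c ^ 2 + 2 * l1 ^ 2 + 1).
Proof.
  intros Hl HO.
  assert (Gp := fun x => G_pos l1 l2 c th x Hl HO).
  assert (Fp : forall x, 0 < Ffun l1 l2 c th x).
  { intros x. unfold Ffun. apply sqrt_lt_R0. apply Gp. }
  assert (EB : forall x y, Bfun l1 l2 x = Bfun l1 l2 y -> Ffun l1 l2 c th x = Ffun l1 l2 c th y).
  { intros x y e. unfold Ffun. rewrite e. reflexivity. }
  split; [|split; [|split; [|split]]].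
  - exact Fp.
  - intros x. unfold Ffun. cbv zeta.
    set (G := c ^ 2 + 2 * cos th * Bfun l1 l2 x - (sin th / c) ^ 2 * Bfun l1 l2 x ^ 2).
    assert (hG : 0 < G) by apply Gp.
    assert (G <= c ^ 2 + 2 * l1 ^ 2).
    { unfold G. pose proof (B_bounds l1 l2 x Hl). pose proof (COS_bound th).
      pose proof (pow2_ge_0 (sin th / c)). pose proof (pow2_ge_0 (Bfun l1 l2 x)).
      assert (cos th * Bfun l1 l2 x <= l1 ^ 2) by nra. nra. }
    rewrite <- (sqrt_pow2 (c ^ 2 + 2 * l1 ^ 2 + 1)) by (pose proof (pow2_ge_0 c); pose proof (pow2_ge_0 l1); lra).
    apply sqrt_le_1_alt. nra.
  - intros x. apply (@ex_derive_continuous R_AbsRing R_NormedModule).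
    assert (hx := Gp x). assert (hF := Fp x). revert hx hF. generalize x as z. intros z hx hF.
    unfold Ffun, Bfun in *. cbv zeta in *. auto_derive.
    match goal with |- 0 < ?a /\ _ =>
      assert (E : a = c ^ 2 + 2 * cos th * (l1 ^ 2 * cos z ^ 2 + l2 ^ 2 * sin z ^ 2) -
       (sin th / c) ^ 2 * (l1 ^ 2 * cos z ^ 2 + l2 ^ 2 * sin z ^ 2) ^ 2) by (simpl; ring);
      rewrite E end.
    split; [lra| split; [lra|exact I]].
  - intros x. apply EB. unfold Bfun. rewrite cos_neg, sin_neg. ring.
  - intros x. apply EB. unfold Bfun. rewrite neg_cos, neg_sin. ring.
Qed.

Theorem proposition5p1 (l1 l2 c th : R)
  (Hl : lambda_hyp l1 l2) (HO : in_Omega l1 c th) :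
  (* (1) well-defined: existence and uniqueness of the global solution *)
  (exists phi : R -> R, is_solution l1 l2 c th phi) /\
  (forall phi psi : R -> R, is_solution l1 l2 c th phi ->
     is_solution l1 l2 c th psi -> forall u, phi u = psi u) /\
  (forall phi : R -> R, is_solution l1 l2 c th phi ->
     (* (1) increasing bijection R -> R *)
     ((forall x y, x < y -> phi x < phi y) /\
      (forall x y, phi x = phi y -> x = y) /\
      (forall y, exists x, phi x = y)) /\
     (* (2) odd *)
     (forall u, phi (- u) = - phi u) /\
     (* (3)-(5) *)
     (exists U : R, 0 < U /\
        (forall u, phi (u + U) = phi u + PI) /\
        (forall k : Z, phi (IZR k * U) = IZR k * PI) /\
        (forall k : Z, Z.odd k = true -> phi (IZR k * U / 2) = IZR k * PI / 2))).
Proof.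
  exact (main_gen _ _ (Ffun_good l1 l2 c th Hl HO)).
Qed.
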